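(* Let $(\rho,\mathbf{u},\Sigma)$ be a smooth solution on $\Omega\subset\mathbb{R}^d$, with $\rho>0$ and $\alpha>0$, of the pressureless IGR system $$\partial_t\rho+\nabla\cdot(\rho\mathbf{u})=0,\quad \partial_t(\rho\mathbf{u})+\nabla\cdot(\rho\mathbf{u}\otimes\mathbf{u}+\Sigma\,\mathbb{I})=0,$$ $$\rho^{-1}\Sigma-\alpha\nabla\cdot(\rho^{-1}\nabla\Sigma)=\alpha\big(\mathrm{tr}^2(\nabla\mathbf{u})+\mathrm{tr}((\nabla\mathbf{u})^2)\big).$$ Then $K_E=\frac12\rho\big(|\mathbf{u}|^2+\alpha(\nabla\cdot\mathbf{u})^2\big)$ satisfies $$\partial_t K_E+\nabla\cdot\big((K_E+\Sigma)\mathbf{u}\big)=\alpha\,\rho\,(\nabla\cdot\mathbf{u})^3.$$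
   Context: $\nabla\mathbf{u}$ is the velocity gradient matrix, $\mathrm{tr}^2(\cdot)=(\mathrm{tr}(\cdot))^2$, $\mathbb{I}$ the identity matrix, and $(\nabla\cdot(\mathbf{a}\otimes\mathbf{b}))_i=\sum_j\partial_j(a_ib_j)$. *)

(* Defs.v *)
From HB Require Import structures.
From mathcomp Require Import all_boot all_order all_algebra.
From mathcomp Require Import all_classical all_reals all_analysis.
Set Implicit Arguments. Unset Strict Implicit. Unset Printing Implicit Defensive.
Import Order.TTheory GRing.Theory Num.Theory.
Import numFieldNormedType.Exports.
Local Open Scope classical_set_scope.
Local Open Scope ring_scope.

Section IGR.
Variables (R : realType) (d : nat).

Definition dt (f : R -> 'rV[R]_d -> R) (t : R) (x : 'rV[R]_d) : R :=
  derive1 (fun s => f s x) t.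

Definition dx (j : 'I_d) (f : R -> 'rV[R]_d -> R) (t : R) (x : 'rV[R]_d) : R :=
  'D_(delta_mx 0 j) (f t) x.

Definition gradu (u : R -> 'rV[R]_d -> 'rV[R]_d) (t : R) (x : 'rV[R]_d)
  : 'M[R]_d := \matrix_(i, j) dx j (fun s y => u s y 0 i) t x.

Definition divu (u : R -> 'rV[R]_d -> 'rV[R]_d) (t : R) (x : 'rV[R]_d) : R :=
  \sum_(j < d) dx j (fun s y => u s y 0 j) t x.

(* spacetime points z = (t, x) in R^(1+d) *)
Definition uncurry (f : R -> 'rV[R]_d -> R) (z : 'rV[R]_(1 + d)) : R :=
  f (lsubmx z 0 0) (rsubmx z).

Definition stdom (I : set R) (Om : set 'rV[R]_d) : set 'rV[R]_(1 + d) :=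
  [set z | I (lsubmx z 0 0) /\ Om (rsubmx z)].

End IGR.

Definition ipartial (R : realType) (n : nat) (l : seq 'I_n)
  (g : 'rV[R]_n -> R) : 'rV[R]_n -> R :=
  foldr (fun i h => fun z => 'D_(delta_mx 0 i) h z) g l.

Definition smooth_on (R : realType) (n : nat) (D : set 'rV[R]_n)
  (g : 'rV[R]_n -> R) : Prop :=
  forall (l : seq 'I_n) (z : 'rV[R]_n), D z -> differentiable (ipartial l g) z.

(* Main.v *)
Require Import Defs.
From HB Require Import structures.
From mathcomp Require Import all_boot all_order all_algebra.
From mathcomp Require Import all_classical all_reals all_analysis.
From mathcomp Require Import ring lra.
Import Order.TTheory GRing.Theory Num.Theory.
Import numFieldNormedType.Exports.
Local Open Scope classical_set_scope.
Local Open Scope ring_scope.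

Section Schw.
Variable R : realType.
Lemma derive_line (V V' W : normedModType R) (f : V -> W) (g : V' -> W) a v b w :
  (forall h : R, f (h *: v + a) = g (h *: w + b)) -> 'D_v f a = 'D_w g b.
Proof.
move=> H; rewrite /derive.
have Hab : f a = g b by have := H 0; rewrite !scale0r !add0r.
suff -> : (fun h : R => h^-1 *: ((f \o shift a) (h *: v) - f a)) =
   (fun h : R => h^-1 *: ((g \o shift b) (h *: w) - g b)) by [].
by apply: funext => h /=; rewrite Hab H.
Qed.

Lemma derivable_line (V V' W : normedModType R) (f : V -> W) (g : V' -> W) a v b w :
  (forall h : R, f (h *: v + a) = g (h *: w + b)) -> derivable f a v -> derivable g b w.
Proof.
move=> H; rewrite /derivable.
have Hab : f a = g b by have := H 0; rewrite !scale0r !add0r.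
suff -> : (fun h : R => h^-1 *: ((f \o shift a) (h *: v) - f a)) =
   (fun h : R => h^-1 *: ((g \o shift b) (h *: w) - g b)) by [].
by apply: funext => h /=; rewrite Hab H.
Qed.

Variable n : nat.
Local Notation V := 'rV[R]_n.

Lemma diff_eps (f : V -> R) x eps : differentiable f x -> 0 < eps ->
  exists2 del, 0 < del & forall w, `|w| < del -> `|f (w + x) - f x - 'd f x w| <= eps * `|w|.
Proof.
move=> /diff_locally /eqaddoP H /H {H}.
move=> /nbhs_normP [del del0 Hd]; exists del => // w wd.
have := Hd w; rewrite /= sub0r normrN => /(_ wd).
by rewrite /= /shift opprD addrA.
Qed.
Lemma line_derive (F : V -> R) (p a : V) (s : R) :
  differentiable F (s *: a + p) ->
  is_derive s 1 (fun s => F (s *: a + p)) ('D_a F (s *: a + p)).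
Proof.
move=> dF.
have H : forall h : R, F (h *: a + (s *: a + p)) = F ((h *: 1 + s) *: a + p).
  by move=> h; rewrite [h *: 1]mulr1 scalerDl addrA.
have dd : derivable F (s *: a + p) a by exact: diff_derivable.
split; first exact: (@derivable_line _ _ _ F (fun s : R => F (s *: a + p)) _ _ _ _ H dd).
by rewrite (@derive_line _ _ _ F (fun s : R => F (s *: a + p)) _ _ _ _ H).
Qed.

Lemma half (F : V -> R) z a b r eps h :
  0 < eps -> 0 < h -> h * (`|a| + `|b|) < r ->
  (forall w, `|w| < r -> differentiable F (w + z)) ->
  (forall w, `|w| < r ->
     `|'D_a F (w + z) - 'D_a F z - 'd ('D_a F) z w| <= eps * `|w|) ->
  `|F (h *: a + h *: b + z) - F (h *: a + z) - F (h *: b + z) + F z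
     - h ^+ 2 * 'd ('D_a F) z b| <= eps * (h ^+ 2 * (2 * `|a| + `|b|)).
Proof.
move=> ep0 h0 hr Hd He.
have nb : forall c, 0 <= c <= h -> `|c *: a + h *: b| < r.
  move=> c /andP[c0 ch]; apply: le_lt_trans hr.
  apply: (le_trans (ler_normD _ _)); rewrite !normrZ !ger0_norm ?(ltW h0) //.
  by rewrite mulrDr lerD2r ler_wpM2r.
have nb2 : forall c, 0 <= c <= h -> `|c *: a| < r.
  move=> c /andP[c0 ch]; apply: le_lt_trans hr.
  rewrite normrZ ger0_norm // mulrDr -[c * _]addr0; apply: lerD.
    by rewrite ler_wpM2r.
  by rewrite mulr_ge0 // ltW.
have dg : forall c, 0 <= c <= h -> is_derive c 1
   ((fun s : R => F (s *: a + (h *: b + z))) - (fun s : R => F (s *: a + z)))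
   ('D_a F (c *: a + (h *: b + z)) - 'D_a F (c *: a + z)).
  move=> c hc; apply: is_deriveB; apply: line_derive.
    by rewrite addrA; apply: Hd; apply: nb.
  by apply: Hd; apply: nb2.
set g := ((fun s : R => F (s *: a + (h *: b + z))) - (fun s : R => F (s *: a + z))) in dg.
have Hcont : {within `[0, h], continuous g}.
  apply: continuous_in_subspaceT => x; rewrite inE /= in_itv /= => hx.
  have [dd _] := dg x hx.
  exact/differentiable_continuous/derivable1_diffP.
have [x||c cin Hc] := @MVT R g (fun c => 'D_a F (c *: a + (h *: b + z)) - 'D_a F (c *: a + z)) 0 h h0.
- rewrite in_itv /= => /andP[x0 xh]; apply: dg; by rewrite !ltW.
- exact: Hcont.
move: cin; rewrite in_itv /= => /andP[c0 ch].
have hc : 0 <= c <= h by rewrite !ltW.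
have e1 : F (h *: a + h *: b + z) - F (h *: a + z) - F (h *: b + z) + F z = g h - g 0.
  have -> : g h - g 0 = (F (h *: a + (h *: b + z)) - F (h *: a + z))
     - (F (0 *: a + (h *: b + z)) - F (0 *: a + z)) by [].
  by rewrite !scale0r !add0r addrA; ring.
rewrite e1 Hc subr0 addrA.
set w1 := c *: a + h *: b; set w2 := c *: a.
have E1 := He w1 (nb c hc); have E2 := He w2 (nb2 c hc).
have L : 'd ('D_a F) z w1 = 'd ('D_a F) z w2 + h * 'd ('D_a F) z b.
  by rewrite /w1 linearD; congr (_ + _); rewrite linearZ.
set X1 := 'D_a F (w1 + z) - 'D_a F z - 'd ('D_a F) z w1 in E1.
set X2 := 'D_a F (w2 + z) - 'D_a F z - 'd ('D_a F) z w2 in E2.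
have -> : ('D_a F (w1 + z) - 'D_a F (w2 + z)) * h - h ^+ 2 * 'd ('D_a F) z b
   = h * (X1 - X2) by rewrite /X1 /X2 L; ring.
have B1 : `|w1| <= h * `|a| + h * `|b|.
  rewrite /w1; apply: (le_trans (ler_normD _ _)); rewrite !normrZ !ger0_norm ?(ltW h0) ?(ltW c0) //.
  by rewrite lerD2r ler_wpM2r // ltW.
have B2 : `|w2| <= h * `|a|.
  by rewrite /w2 normrZ ger0_norm ?ler_wpM2r // ltW.
have T := ler_normB X1 X2.
rewrite normrM ger0_norm ?(ltW h0) //.
have K : `|X1 - X2| <= eps * (h * (2 * `|a| + `|b|)).
  apply: (le_trans T).
  have K1 : eps * `|w1| <= eps * (h * `|a| + h * `|b|) by rewrite ler_wpM2l // ltW.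
  have K2 : eps * `|w2| <= eps * (h * `|a|) by rewrite ler_wpM2l // ltW.
  lra.
have := ler_wpM2l (ltW h0) K.
have -> : h * (eps * (h * (2 * `|a| + `|b|))) = eps * (h ^+ 2 * (2 * `|a| + `|b|)) by ring.
by [].
Qed.

Lemma zero_small (x : R) : 0 <= x -> (forall e, 0 < e -> x <= e) -> x = 0.
Proof.
move=> x0 H; apply/eqP; rewrite eq_le x0 andbT leNgt; apply/negP => xp.
have : 0 < x / 2 by rewrite divr_gt0.
move=> /H; lra.
Qed.

Lemma combine (X X' c1 c2 P Q A B eps : R) : 0 < P -> 0 <= A -> 0 <= B -> 0 < Q ->
  Q * (3 * (A + B)) <= eps ->
  `|X - P * c1| <= Q * (P * (2 * A + B)) ->
  `|X' - P * c2| <= Q * (P * (2 * B + A)) -> X = X' -> `|c1 - c2| <= eps.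
Proof.
move=> P0 A0 B0 Q0 eK A1 A2 XX; subst X'.
have T : P * `|c1 - c2| <= `|X - P * c2| + `|X - P * c1|.
  rewrite -{1}(ger0_norm (ltW P0)) -normrM.
  rewrite (_ : P * (c1 - c2) = (X - P * c2) - (X - P * c1)); last by ring.
  exact: ler_normB.
have : P * `|c1 - c2| <= P * eps.
  apply: (le_trans T); rewrite addrC.
  have E : Q * (P * (2 * A + B)) + Q * (P * (2 * B + A)) = P * (Q * (3 * (A + B))) by ring.
  apply: (le_trans (lerD A1 A2)); rewrite E; apply: ler_wpM2l => //; exact: ltW.
move=> H; rewrite -(ler_pM2l P0); exact: H.
Qed.

Lemma schwarz (F : V -> R) z a b r : 0 < r ->
  (forall w, `|w| < r -> differentiable F (w + z)) ->
  differentiable ('D_a F) z -> differentiable ('D_b F) z ->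
  'D_b ('D_a F) z = 'D_a ('D_b F) z.
Proof.
move=> r0 Hd da db; rewrite (deriveE b da) (deriveE a db).
apply/eqP; rewrite -subr_eq0 -normr_eq0; apply/eqP.
apply: zero_small => // eps ep0.
pose K := 3 * (`|a| + `|b|) + 1.
have K0 : 0 < K by rewrite /K; have := normr_ge0 a; have := normr_ge0 b; lra.
have e0 : 0 < eps / K by rewrite divr_gt0.
have [d1 d10 H1] := diff_eps _ _ _ da e0.
have [d2 d20 H2] := diff_eps _ _ _ db e0.
pose r' := Num.min r (Num.min d1 d2).
have r'0 : 0 < r' by rewrite /r' !lt_min r0 d10 d20.
have r'1 : r' <= r by rewrite /r' ge_min lexx.
have r'2 : r' <= d1 by rewrite /r' !ge_min lexx orbT.
have r'3 : r' <= d2 by rewrite /r' !ge_min lexx !orbT.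
pose M := `|a| + `|b| + 1.
have M0 : 0 < M by rewrite /M; have := normr_ge0 a; have := normr_ge0 b; lra.
pose h := r' / (2 * M).
have h0 : 0 < h by rewrite /h divr_gt0 // mulr_gt0.
have hM : h * M < r'.
  have -> : h * M = r' / 2 by rewrite /h; field; rewrite gt_eqF.
  lra.
have hab : h * (`|a| + `|b|) < r'.
  by apply: le_lt_trans hM; rewrite ler_wpM2l ?ltW // /M; lra.
have Hd' : forall w, `|w| < r' -> differentiable F (w + z).
  by move=> w hw; apply: Hd; apply: lt_le_trans r'1.
have A1 := half _ _ _ _ _ _ _ e0 h0 hab Hd' (fun w hw => H1 w (lt_le_trans hw r'2)).
have hba : h * (`|b| + `|a|) < r' by rewrite addrC.
have A2 := half _ _ _ _ _ _ _ e0 h0 hba Hd' (fun w hw => H2 w (lt_le_trans hw r'3)).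
have eK : eps / K * (3 * (`|a| + `|b|)) <= eps.
  have : 3 * (`|a| + `|b|) <= K by rewrite /K; lra.
  move/(ler_wpM2l (ltW e0)); rewrite divfK ?gt_eqF //.
have h20 : 0 < h ^+ 2 by rewrite exprn_gt0.
have C := combine _ _ _ _ _ _ _ _ _ h20 (normr_ge0 a) (normr_ge0 b) e0 eK A1 A2.
apply: C.
by rewrite (addrC (h *: b) (h *: a)); ring.
Qed.
End Schw.

Section Calc.
Variable R : realType.

Variable m : nat.
Local Notation V := 'rV[R]_m.

Lemma dfM (f g : V -> R) x v : differentiable f x -> differentiable g x ->
  'D_v (fun y => f y * g y) x = 'D_v f x * g x + f x * 'D_v g x.
Proof.
move=> df dg; have := deriveM (diff_derivable df) (diff_derivable dg).
move=> ->; rewrite addrC mulrC; congr (_ + _).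
Qed.

Lemma dfD (f g : V -> R) x v : differentiable f x -> differentiable g x ->
  'D_v (fun y => f y + g y) x = 'D_v f x + 'D_v g x.
Proof.
by move=> df dg; have := deriveD (diff_derivable df) (diff_derivable dg).
Qed.

Lemma dfB (f g : V -> R) x v : differentiable f x -> differentiable g x ->
  'D_v (fun y => f y - g y) x = 'D_v f x - 'D_v g x.
Proof.
by move=> df dg; have := deriveB (diff_derivable df) (diff_derivable dg).
Qed.

Lemma dfsum k (f : 'I_k -> V -> R) x v : (forall i, differentiable (f i) x) ->
  'D_v (fun y => \sum_(i < k) f i y) x = \sum_(i < k) 'D_v (f i) x.
Proof.
move=> df; rewrite -(derive_sum (fun i => diff_derivable (df i))).
by rewrite fct_sumE.
Qed.

Lemma dfcM (c : R) (f : V -> R) x v : differentiable f x ->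
  'D_v (fun y => c * f y) x = c * 'D_v f x.
Proof.
move=> df; have -> : (fun y => c * f y) = (fun y => cst c y * f y) by [].
by rewrite (@dfM (cst c) f x v (differentiable_cst c x) df) derive_cst mul0r add0r.
Qed.

Lemma dfN (f : V -> R) x v : differentiable f x ->
  'D_v (fun y => - f y) x = - 'D_v f x.
Proof. by move=> df; have := deriveN (diff_derivable df). Qed.

Lemma difN (f : V -> R) x : differentiable f x ->
  differentiable (fun y => - f y) x.
Proof. by move=> df; apply: differentiableN. Qed.

Lemma difV (f : V -> R) x : differentiable f x -> f x != 0 ->
  differentiable (fun y => (f y)^-1) x.
Proof. by move=> df fx; apply: differentiableV. Qed.

Lemma dfX2 (f : V -> R) x v : differentiable f x ->
  'D_v (fun y => f y ^+ 2) x = 2 * f x * 'D_v f x.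
Proof.
move=> df; have -> : (fun y => f y ^+ 2) = (fun y => f y * f y).
  by apply: funext => y; rewrite expr2.
by rewrite (dfM f f x v df df); ring.
Qed.

Lemma difM (f g : V -> R) x : differentiable f x -> differentiable g x ->
  differentiable (fun y => f y * g y) x.
Proof. by move=> df dg; apply: differentiableM. Qed.

Lemma difX2 (f : V -> R) x : differentiable f x ->
  differentiable (fun y => f y ^+ 2) x.
Proof.
move=> df; have -> : (fun y => f y ^+ 2) = (fun y => f y * f y).
  by apply: funext => y; rewrite expr2.
exact: difM.
Qed.

Lemma difD (f g : V -> R) x : differentiable f x -> differentiable g x ->
  differentiable (fun y => f y + g y) x.
Proof. by move=> df dg; apply: differentiableD. Qed.

Lemma difsum k (f : 'I_k -> V -> R) x : (forall i, differentiable (f i) x) ->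
  differentiable (fun y => \sum_(i < k) f i y) x.
Proof. by move=> df; rewrite -fct_sumE; apply: differentiable_sum. Qed.

End Calc.

Section T.
Variable R : realType.
Variable d : nat.
Local Notation V := 'rV[R]_(1 + d).
Definition ee (k : 'I_(1 + d)) : V := delta_mx 0 k.
Definition TT : 'I_(1+d) := lshift d ord0.
Definition XX (j : 'I_d) : 'I_(1+d) := rshift 1 j.

Lemma lsub_shift_T (h : R) (z : V) : lsubmx (h *: ee TT + z) 0 0 = h + lsubmx z 0 0.
Proof. by rewrite !mxE /= mulr1. Qed.
Lemma rsub_shift_T (h : R) (z : V) : rsubmx (h *: ee TT + z) = rsubmx z.
Proof. by apply/rowP => k; rewrite !mxE /= mulr0 add0r. Qed.
Lemma lsub_shift_X j (h : R) (z : V) : lsubmx (h *: ee (XX j) + z) 0 0 = lsubmx z 0 0.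
Proof. by rewrite !mxE /= mulr0 add0r. Qed.
Lemma rsub_shift_X j (h : R) (z : V) :
  rsubmx (h *: ee (XX j) + z) = h *: delta_mx 0 j + rsubmx z.
Proof. by apply/rowP => k; rewrite !mxE /= /XX (inj_eq (@rshift_inj _ _)). Qed.

Lemma dt_unc (f : R -> 'rV[R]_d -> R) (z : V) :
  dt f (lsubmx z 0 0) (rsubmx z) = 'D_(ee TT) (uncurry f) z.
Proof.
rewrite /dt derive1E; apply: derive_line => h.
by rewrite /uncurry lsub_shift_T rsub_shift_T [h *: 1]mulr1.
Qed.

Lemma dx_unc j (f : R -> 'rV[R]_d -> R) (z : V) :
  dx j f (lsubmx z 0 0) (rsubmx z) = 'D_(ee (XX j)) (uncurry f) z.
Proof.
rewrite /dx; apply: derive_line => h.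
by rewrite /uncurry lsub_shift_X rsub_shift_X.
Qed.

Lemma open_stdom (I : set R) (Om : set 'rV[R]_d) : open I -> open Om ->
  open (stdom I Om).
Proof.
move=> oI oOm.
have -> : stdom I Om = (fun z : V => lsubmx z 0 0) @^-1` I `&` rsubmx @^-1` Om by [].
apply: openI; apply: open_comp => // z _.
  exact: (continuous_comp (@continuous_lsubmx R 1 1 d z) (@coord_continuous R 1 1 0 0 (lsubmx z))).
exact: continuous_rsubmx.
Qed.

Lemma open_ball (D : set V) z : open D -> D z ->
  exists2 r, 0 < r & forall w, `|w| < r -> D (w + z).
Proof.
rewrite openE => oD /oD /nbhs_normP [e e0 He]; exists e => // w hw.
by apply: He; rewrite /= opprD addrCA subrr addr0 normrN.
Qed.

Lemma open_near (D : set V) z : open D -> D z -> \forall w \near z, D w.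
Proof. by rewrite openE => oD /oD. Qed.

End T.
Arguments ee {R d} k.
Arguments TT {d}.
Arguments XX {d} j.
Arguments dt_unc {R d} f z.
Arguments dx_unc {R d} j f z.
Arguments open_ball {R d} D z.
Arguments open_near {R d} D z.
Arguments schwarz {R n} F z a b r.
Arguments dfM {R m} f g x v.
Arguments dfD {R m} f g x v.
Arguments dfB {R m} f g x v.
Arguments dfsum {R m k} f x v.
Arguments dfcM {R m} c f x v.
Arguments difM {R m} [f g x].
Arguments difD {R m} [f g x].
Arguments difsum {R m k} [f x].
Arguments dfN {R m} f x v.
Arguments difN {R m} [f x].
Arguments difV {R m} [f x].
Arguments dfX2 {R m} f x v.
Arguments difX2 {R m} [f x].

Section Alg.
Variable R : realType.

Lemma sum_delta k (i : 'I_k) (f : 'I_k -> R) :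
  \sum_(j < k) (i == j)%:R * f j = f i.
Proof.
rewrite (bigD1 i) //= eqxx mul1r big1 ?addr0 // => j.
by rewrite eq_sym => /negbTE ->; rewrite mul0r.
Qed.

Lemma vel_alg k (i : 'I_k) (p pt ui uit : R) (pj uj ujj uij sj : 'I_k -> R) :
  p != 0 ->
  pt + \sum_(j < k) (pj j * uj j + p * ujj j) = 0 ->
  pt * ui + p * uit + \sum_(j < k) ((pj j * ui + p * uij j) * uj j
      + p * ui * ujj j + (i == j)%:R * sj j) = 0 ->
  uit = - (\sum_(j < k) uj j * uij j + p^-1 * sj i).
Proof.
move=> p0 Hm.
have -> : \sum_(j < k) ((pj j * ui + p * uij j) * uj j
      + p * ui * ujj j + (i == j)%:R * sj j) =
   ui * \sum_(j < k) (pj j * uj j + p * ujj j) + p * \sum_(j < k) uj j * uij j + sj i.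
  rewrite big_split /= sum_delta; congr (_ + _).
  rewrite !mulr_sumr -big_split; apply: eq_bigr => j _ /=; ring.
have -> : \sum_(j < k) (pj j * uj j + p * ujj j) = - pt by apply/eqP; rewrite -addr_eq0 addrC Hm.
move=> H; apply: (mulfI p0).
rewrite mulrN mulrDr mulrA mulfV // mul1r.
by rewrite -[LHS]subr0 -{1}H; ring.
Qed.
End Alg.

Section Alg2.
Variable R : realType.

Lemma final_alg k (al p pt s Dv Dt : R) (u ut pj sj Dj q : 'I_k -> R)
  (uij : 'I_k -> 'I_k -> R) :
  p != 0 -> al != 0 ->
  Dv = \sum_(i < k) uij i i ->
  pt + \sum_(j < k) (pj j * u j + p * uij j j) = 0 ->
  (forall i, ut i = - (\sum_(j < k) u j * uij i j + p^-1 * sj i)) ->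
  Dt = - (\sum_(i < k) \sum_(j < k) (uij j i * uij i j) + \sum_(j < k) u j * Dj j
          + \sum_(i < k) q i) ->
  p^-1 * s - al * \sum_(j < k) q j
    = al * (Dv ^+ 2 + \sum_(i < k) \sum_(j < k) uij i j * uij j i) ->
  2^-1 * pt * (\sum_(i < k) u i ^+ 2 + al * Dv ^+ 2)
  + 2^-1 * p * (\sum_(i < k) 2 * u i * ut i + al * (2 * Dv * Dt))
  + \sum_(j < k) ((2^-1 * pj j * (\sum_(i < k) u i ^+ 2 + al * Dv ^+ 2)
        + 2^-1 * p * (\sum_(i < k) 2 * u i * uij i j + al * (2 * Dv * Dj j)) + sj j) * u j
      + (2^-1 * p * (\sum_(i < k) u i ^+ 2 + al * Dv ^+ 2) + s) * uij j j)
  = al * p * Dv ^+ 3.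
Proof.
move=> p0 al0 HDv Hm Hv HDt Higr.
set A := \sum_(i < k) u i ^+ 2 + al * Dv ^+ 2.
set SS := \sum_(j < k) u j * \sum_(i < k) u i * uij i j.
set Y := \sum_(j < k) pj j * u j.
set Z := \sum_(j < k) u j * Dj j.
set W := \sum_(j < k) sj j * u j.
set T2 := \sum_(i < k) \sum_(j < k) uij i j * uij j i.
set Q := \sum_(i < k) q i.
have SSe : SS = \sum_(i < k) u i * \sum_(j < k) u j * uij i j.
  rewrite /SS; under eq_bigr do rewrite mulr_sumr.
  rewrite exchange_big /=; apply: eq_bigr => i _; rewrite mulr_sumr.
  by apply: eq_bigr => j _; ring.
have Ea : \sum_(i < k) 2 * u i * ut i = - 2 * SS - 2 * p^-1 * W.
  rewrite SSe /W !mulr_sumr -sumrN -big_split /=.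
  by apply: eq_bigr => i _; rewrite Hv; ring.
have inner2 : forall j, \sum_(i < k) 2 * u i * uij i j = 2 * \sum_(i < k) u i * uij i j.
  by move=> j; rewrite mulr_sumr; apply: eq_bigr => i _; ring.
rewrite [X in _ + X = _](eq_bigr (fun j => 2^-1 * A * (pj j * u j)
   + p * (u j * \sum_(i < k) u i * uij i j) + al * p * Dv * (u j * Dj j)
   + sj j * u j + (2^-1 * p * A + s) * uij j j)); last first.
  by move=> j _; rewrite inner2; field.
rewrite !big_split /= -!mulr_sumr -HDv -/SS -/Y -/Z -/W Ea.
have Hpt : pt = - Y - p * Dv.
  apply/eqP; rewrite -subr_eq0 -Hm big_split /= -mulr_sumr -HDv -/Y; apply/eqP; ring.
have T2e : \sum_(i < k) \sum_(j < k) (uij j i * uij i j) = T2.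
  by apply: eq_bigr => i _; apply: eq_bigr => j _; rewrite mulrC.
have HQ : Q = al^-1 * (p^-1 * s) - (Dv ^+ 2 + T2).
  apply: (mulfI al0).
  have -> : al * Q = p^-1 * s - al * (Dv ^+ 2 + T2) by rewrite -Higr /Q; ring.
  by field; rewrite p0 al0.
rewrite HDt T2e -/Q -/Z HQ Hpt /A.
by field; rewrite p0 al0.
Qed.
End Alg2.

Theorem mainTheorem9 (R : realType) (d : nat) (I : set R) (Om : set 'rV[R]_d)
  (alpha : R) (rho Sig : R -> 'rV[R]_d -> R)
  (u : R -> 'rV[R]_d -> 'rV[R]_d) :
  open I -> open Om -> 0 < alpha ->
  smooth_on (stdom I Om) (uncurry rho) ->
  smooth_on (stdom I Om) (uncurry Sig) ->
  (forall i : 'I_d, smooth_on (stdom I Om) (uncurry (fun s y => u s y 0 i))) ->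
  (forall t x, I t -> Om x -> 0 < rho t x) ->
  (* mass *)
  (forall t x, I t -> Om x ->
     dt rho t x + \sum_(j < d) dx j (fun s y => rho s y * u s y 0 j) t x = 0) ->
  (* momentum *)
  (forall t x, I t -> Om x -> forall i : 'I_d,
     dt (fun s y => rho s y * u s y 0 i) t x
     + \sum_(j < d) dx j (fun s y => rho s y * u s y 0 i * u s y 0 j
                                      + (i == j)%:R * Sig s y) t x = 0) ->
  (* IGR equation for Sigma *)
  (forall t x, I t -> Om x ->
     (rho t x)^-1 * Sig t x
     - alpha * \sum_(j < d) dx j (fun s y => (rho s y)^-1 * dx j Sig s y) t x
     = alpha * ((\tr (gradu u t x)) ^+ 2 + \tr (gradu u t x *m gradu u t x))) ->
  let KE := fun s y => 2^-1 * rho s y *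
              (\sum_(i < d) (u s y 0 i) ^+ 2 + alpha * (divu u s y) ^+ 2) in
  forall t x, I t -> Om x ->
    dt KE t x + \sum_(j < d) dx j (fun s y => (KE s y + Sig s y) * u s y 0 j) t x
    = alpha * rho t x * (divu u t x) ^+ 3.
Proof.
move=> oI oOm a0 sP sS sU rpos Hmass Hmom Higr KE t x It Ox.
pose D := stdom I Om.
have oD : open D := @open_stdom R d I Om oI oOm.
have [z [zt zx] Dz] : exists2 z : 'rV[R]_(1 + d),
    (t = lsubmx z 0 0 /\ x = rsubmx z) & D z.
  exists (row_mx (t%:M) x); first split.
  - by rewrite (@row_mxKl R 1 1 d) mxE eqxx mulr1n.
  - by rewrite (@row_mxKr R 1 1 d).
  by split; rewrite /= ?(@row_mxKl R 1 1 d) ?(@row_mxKr R 1 1 d) // mxE eqxx mulr1n.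
subst t x.
pose P := uncurry rho. pose S := uncurry Sig.
pose U := fun i => uncurry (fun s y => u s y 0 i).
have dP0 : forall w, D w -> differentiable P w := fun w Dw => sP [::] w Dw.
have dP1 : forall k w, D w -> differentiable ('D_(ee k) P) w := fun k w Dw => sP [:: k] w Dw.
have dS0 : forall w, D w -> differentiable S w := fun w Dw => sS [::] w Dw.
have dS1 : forall k w, D w -> differentiable ('D_(ee k) S) w := fun k w Dw => sS [:: k] w Dw.
have dU0 : forall i w, D w -> differentiable (U i) w := fun i w Dw => sU i [::] w Dw.
have dU1 : forall i k w, D w -> differentiable ('D_(ee k) (U i)) w :=
  fun i k w Dw => sU i [:: k] w Dw.
have dU2 : forall i k l w, D w -> differentiable ('D_(ee k) ('D_(ee l) (U i))) w :=
  fun i k l w Dw => sU i [:: k; l] w Dw.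
have Pne : forall w, D w -> P w != 0.
  by move=> w [It' Ox']; rewrite gt_eqF //; apply: rpos.
have Mass : forall w, D w -> 'D_(ee TT) P w + \sum_(j < d) ('D_(ee (XX j)) P w * U j w
     + P w * 'D_(ee (XX j)) (U j) w) = 0.
  move=> w Dw; case: (Dw) => It' Ox'; have := Hmass _ _ It' Ox'.
  rewrite dt_unc; under eq_bigr => j _ do rewrite dx_unc
    (_ : uncurry _ = fun y => P y * U j y) // (dfM P (U j) w _ (dP0 w Dw) (dU0 j w Dw)).
  by [].
have Mom : forall w, D w -> forall i,
  'D_(ee TT) P w * U i w + P w * 'D_(ee TT) (U i) w
  + \sum_(j < d) ((('D_(ee (XX j)) P w * U i w + P w * 'D_(ee (XX j)) (U i) w) * U j w
     + P w * U i w * 'D_(ee (XX j)) (U j) w) + (i == j)%:R * 'D_(ee (XX j)) S w) = 0.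
  move=> w Dw i; case: (Dw) => It' Ox'; have := Hmom _ _ It' Ox' i.
  rewrite dt_unc (_ : uncurry _ = fun y => P y * U i y) //.
  rewrite (dfM P (U i) w _ (dP0 w Dw) (dU0 i w Dw)).
  under eq_bigr => j _ do rewrite dx_unc
    (_ : uncurry _ = fun y => P y * U i y * U j y + (i == j)%:R * S y) //
    (dfD (fun y => P y * U i y * U j y) (fun y => (i == j)%:R * S y) w _
       (difM (difM (dP0 w Dw) (dU0 i w Dw)) (dU0 j w Dw))
       (difM (differentiable_cst _ _) (dS0 w Dw)))
    (dfM (fun y => P y * U i y) (U j) w _ (difM (dP0 w Dw) (dU0 i w Dw)) (dU0 j w Dw))
    (dfM P (U i) w _ (dP0 w Dw) (dU0 i w Dw))
    (dfcM _ S w _ (dS0 w Dw)).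
  by [].
have Vel : forall w, D w -> forall i,
  'D_(ee TT) (U i) w = - (\sum_(j < d) U j w * 'D_(ee (XX j)) (U i) w
                          + (P w)^-1 * 'D_(ee (XX i)) S w).
  move=> w Dw i.
  exact: (@vel_alg R d i (P w) ('D_(ee TT) P w) (U i w) ('D_(ee TT) (U i) w)
    (fun j => 'D_(ee (XX j)) P w) (fun j => U j w) (fun j => 'D_(ee (XX j)) (U j) w)
    (fun j => 'D_(ee (XX j)) (U i) w) (fun j => 'D_(ee (XX j)) S w)
    (Pne w Dw) (Mass w Dw) (Mom w Dw i)).
have [r r0 Hr] := open_ball D z oD Dz.
have Sch : forall i a b, 'D_(ee b) ('D_(ee a) (U i)) z = 'D_(ee a) ('D_(ee b) (U i)) z :=
  fun i a b => schwarz (U i) z (ee a) (ee b) r r0 (fun w hw => dU0 i _ (Hr w hw))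
     (dU1 i a z Dz) (dU1 i b z Dz).
have DXV : forall i, 'D_(ee (XX i)) ('D_(ee TT) (U i)) z =
   - (\sum_(j < d) ('D_(ee (XX i)) (U j) z * 'D_(ee (XX j)) (U i) z
         + U j z * 'D_(ee (XX j)) ('D_(ee (XX i)) (U i)) z)
      + 'D_(ee (XX i)) (fun w => (P w)^-1 * 'D_(ee (XX i)) S w) z).
  move=> i.
  rewrite (@near_eq_derive _ _ _ ('D_(ee TT) (U i))
     (fun w => - (\sum_(j < d) U j w * 'D_(ee (XX j)) (U i) w
                          + (P w)^-1 * 'D_(ee (XX i)) S w))); last first.
    by apply: filterS (open_near D z oD Dz) => w Dw; apply: Vel.
  pose F1 := fun w => \sum_(j < d) U j w * 'D_(ee (XX j)) (U i) w.
  pose F2 := fun w => (P w)^-1 * 'D_(ee (XX i)) S w.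
  have dF1 : differentiable F1 z.
    by apply: difsum => j; apply: difM; [apply: dU0 | apply: dU1].
  have dF2 : differentiable F2 z.
    by apply: difM; [apply: difV; [apply: dP0 | apply: Pne] | apply: dS1].
  rewrite (dfN (fun w => F1 w + F2 w) z (ee (XX i)) (difD dF1 dF2)).
  rewrite (dfD F1 F2 z _ dF1 dF2).
  congr (- (_ + _)).
  rewrite /F1 (dfsum (fun j w => U j w * 'D_(ee (XX j)) (U i) w) z _
     (fun j => difM (dU0 j z Dz) (dU1 i (XX j) z Dz))).
  apply: eq_bigr => j _.
  by rewrite (dfM (U j) ('D_(ee (XX j)) (U i)) z _ (dU0 j z Dz) (dU1 i (XX j) z Dz)) Sch.
pose Dv := fun w => \sum_(i < d) 'D_(ee (XX i)) (U i) w.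
have dDv : forall w, D w -> differentiable Dv w :=
  fun w Dw => difsum (fun i => dU1 i _ w Dw).
have DvT : 'D_(ee TT) Dv z =
   - (\sum_(i < d) \sum_(j < d) ('D_(ee (XX i)) (U j) z * 'D_(ee (XX j)) (U i) z)
      + \sum_(j < d) U j z * 'D_(ee (XX j)) Dv z
      + \sum_(i < d) 'D_(ee (XX i)) (fun w => (P w)^-1 * 'D_(ee (XX i)) S w) z).
  rewrite /Dv (dfsum (fun i w => 'D_(ee (XX i)) (U i) w) z _ (fun i => dU1 i _ z Dz)).
  under eq_bigr => i _ do rewrite (Sch i (XX i) TT) DXV.
  rewrite sumrN big_split /=.
  under eq_bigr => i _ do rewrite big_split /=.
  rewrite big_split /=; congr (- (_ + _ + _)).
  rewrite exchange_big /=; apply: eq_bigr => j _.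
  rewrite (dfsum (fun i w => 'D_(ee (XX i)) (U i) w) z _ (fun i => dU1 i _ z Dz)).
  by rewrite mulr_sumr.
have Hig : (P z)^-1 * S z - alpha * \sum_(j < d)
      'D_(ee (XX j)) (fun w => (P w)^-1 * 'D_(ee (XX j)) S w) z
   = alpha * (Dv z ^+ 2 + \sum_(i < d) \sum_(j < d)
        'D_(ee (XX j)) (U i) z * 'D_(ee (XX i)) (U j) z).
  have E1 : \sum_(j < d) dx j (fun s y => (rho s y)^-1 * dx j Sig s y)
      (lsubmx z 0 0) (rsubmx z)
    = \sum_(j < d) 'D_(ee (XX j)) (fun w => (P w)^-1 * 'D_(ee (XX j)) S w) z.
    apply: eq_bigr => j _; rewrite dx_unc.
    rewrite (_ : uncurry _ = fun w => (P w)^-1 * 'D_(ee (XX j)) S w) //.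
    by apply: funext => w; rewrite /uncurry dx_unc.
  have E2 : \tr (gradu u (lsubmx z 0 0) (rsubmx z)) = Dv z.
    rewrite /mxtrace /Dv; apply: eq_bigr => i _; rewrite mxE dx_unc.
    exact: erefl.
  have E3 : \tr (gradu u (lsubmx z 0 0) (rsubmx z) *m gradu u (lsubmx z 0 0) (rsubmx z))
     = \sum_(i < d) \sum_(j < d) 'D_(ee (XX j)) (U i) z * 'D_(ee (XX i)) (U j) z.
    rewrite /mxtrace; apply: eq_bigr => i _; rewrite mxE; apply: eq_bigr => j _.
    rewrite [X in X * _ = _]mxE [X in _ * X = _]mxE !dx_unc.
    exact: erefl.
  have H := Higr _ _ It Ox; rewrite E1 E2 E3 in H; exact: H.
have Dve : forall w, divu u (lsubmx w 0 0) (rsubmx w) = Dv w.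
  by move=> w; rewrite /divu /Dv; apply: eq_bigr => i _; rewrite dx_unc.
pose KEf := fun w => 2^-1 * P w * (\sum_(i < d) U i w ^+ 2 + alpha * Dv w ^+ 2).
have KEe : uncurry KE = KEf.
  by apply: funext => w; rewrite /uncurry /KE /= Dve.
rewrite dt_unc KEe Dve.
under eq_bigr => j _ do rewrite dx_unc
  (_ : uncurry _ = fun w => (uncurry KE w + S w) * U j w) // KEe.
have dA : forall w, D w ->
   differentiable (fun w => \sum_(i < d) U i w ^+ 2 + alpha * Dv w ^+ 2) w.
  move=> w Dw; apply: difD.
    by apply: difsum => i; apply: difX2; apply: dU0.
  by apply: difM; [apply: differentiable_cst | apply: difX2; apply: dDv].
have dKEf : forall w, D w -> differentiable KEf w.
  move=> w Dw; apply: difM; last exact: dA.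
  by apply: difM; [apply: differentiable_cst | apply: dP0].
have dKE : forall v, 'D_v KEf z = 2^-1 * 'D_v P z * (\sum_(i < d) U i z ^+ 2 + alpha * Dv z ^+ 2)
   + 2^-1 * P z * (\sum_(i < d) 2 * U i z * 'D_v (U i) z + alpha * (2 * Dv z * 'D_v Dv z)).
  move=> v.
  rewrite /KEf (dfM (fun w => 2^-1 * P w) (fun w => \sum_(i < d) U i w ^+ 2 + alpha * Dv w ^+ 2)
    z v (difM (differentiable_cst _ _) (dP0 z Dz)) (dA z Dz)).
  rewrite (dfcM _ P z v (dP0 z Dz)).
  rewrite (dfD (fun w => \sum_(i < d) U i w ^+ 2) (fun w => alpha * Dv w ^+ 2) z v
    (difsum (fun i => difX2 (dU0 i z Dz)))
    (difM (differentiable_cst _ _) (difX2 (dDv z Dz)))).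
  rewrite (dfsum (fun i w => U i w ^+ 2) z v (fun i => difX2 (dU0 i z Dz))).
  rewrite (dfcM alpha (fun w => Dv w ^+ 2) z v (difX2 (dDv z Dz))).
  rewrite (dfX2 Dv z v (dDv z Dz)).
  congr (_ + _ * (_ + _)); apply: eq_bigr => i _.
  exact: (dfX2 (U i) z v (dU0 i z Dz)).
have dterm : forall j, 'D_(ee (XX j)) (fun w => (KEf w + S w) * U j w) z
   = ('D_(ee (XX j)) KEf z + 'D_(ee (XX j)) S z) * U j z
     + (KEf z + S z) * 'D_(ee (XX j)) (U j) z.
  move=> j.
  have E := dfM (fun w => KEf w + S w) (U j) z (ee (XX j))
     (difD (dKEf z Dz) (dS0 z Dz)) (dU0 j z Dz).
  rewrite (dfD KEf S z _ (dKEf z Dz) (dS0 z Dz)) in E.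
  exact: E.
rewrite (eq_bigr _ (fun j _ => dterm j)).
rewrite dKE; under eq_bigr => j _ do rewrite dKE.
exact: (@final_alg R d alpha (P z) ('D_(ee TT) P z) (S z) (Dv z) ('D_(ee TT) Dv z)
  (fun j => U j z) (fun j => 'D_(ee TT) (U j) z) (fun j => 'D_(ee (XX j)) P z)
  (fun j => 'D_(ee (XX j)) S z) (fun j => 'D_(ee (XX j)) Dv z)
  (fun i => 'D_(ee (XX i)) (fun w => (P w)^-1 * 'D_(ee (XX i)) S w) z)
  (fun i j => 'D_(ee (XX j)) (U i) z)
  (Pne z Dz) (lt0r_neq0 a0) erefl (Mass z Dz) (Vel z Dz) DvT Hig).
Qed.
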